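(* Let $X$ be a real Hilbert space, $I=\{1,\dots,m\}$, and $(U_i)_{i\in I}$ closed linear subspaces of $X$. Set $U_{m+1}=U_1$, and suppose $U_i+U_{i+1}$ is closed for every $i\in I$. Set $T_i=P_{U_{i+1}}R_{U_i}+\mathrm{Id}-P_{U_i}$, $Z_i=\operatorname{Fix}T_i$, $Z=\bigcap_{i\in I}Z_i$, and $T=T_m\cdots T_1$. Suppose the family $(Z_i)_{i\in I}$ is boundedly linearly regular. Then for every $x_0\in X$, the sequence $(T^nx_0)_{n\in\mathbb N}$ converges linearly to a point of $Z$.
   Context: $P_S$ is the orthogonal projection onto $S$, $R_S=2P_S-\mathrm{Id}$. A finite family $(C_i)_{i\in I}$ of closed convex sets with $C=\bigcap_iC_i\ne\varnothing$ is boundedly linearly regular if for every $\rho>0$ there is $\mu>0$ with $d_C(x)\le\mu\max_{i}d_{C_i}(x)$ for all $\|x\|\le\rho$. Linear convergence to $\bar x$ means $\|x_n-\bar x\|\le cq^n$ for some $c\ge0$, $q\in[0,1[$. *)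

(* Defs.v *)
From Stdlib Require Import Reals Lra Lia ClassicalEpsilon.
Open Scope R_scope.

Record HilbertSpace := {
  carrier :> Type;
  hzero : carrier;
  hadd : carrier -> carrier -> carrier;
  hopp : carrier -> carrier;
  hscal : R -> carrier -> carrier;
  inner : carrier -> carrier -> R;
  hadd_assoc : forall x y z, hadd x (hadd y z) = hadd (hadd x y) z;
  hadd_comm : forall x y, hadd x y = hadd y x;
  hadd_zero : forall x, hadd x hzero = x;
  hadd_opp : forall x, hadd x (hopp x) = hzero;
  hscal_assoc : forall a b x, hscal a (hscal b x) = hscal (a * b) x;
  hscal_one : forall x, hscal 1 x = x;
  hscal_distr_vec : forall a x y, hscal a (hadd x y) = hadd (hscal a x) (hscal a y);
  hscal_distr_scal : forall a b x, hscal (a + b) x = hadd (hscal a x) (hscal b x);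
  inner_sym : forall x y, inner x y = inner y x;
  inner_add_l : forall x y z, inner (hadd x y) z = inner x z + inner y z;
  inner_scal_l : forall a x y, inner (hscal a x) y = a * inner x y;
  inner_pos : forall x, 0 <= inner x x;
  inner_def : forall x, inner x x = 0 -> x = hzero;
  hcomplete : forall u : nat -> carrier,
    (forall eps, 0 < eps -> exists N, forall n k, (N <= n)%nat -> (N <= k)%nat ->
        sqrt (inner (hadd (u n) (hopp (u k))) (hadd (u n) (hopp (u k)))) < eps) ->
    exists l, forall eps, 0 < eps -> exists N, forall n, (N <= n)%nat ->
        sqrt (inner (hadd (u n) (hopp l)) (hadd (u n) (hopp l))) < eps
}.

Arguments hzero {_}.
Arguments hadd {_}.
Arguments hopp {_}.
Arguments hscal {_}.
Arguments inner {_}.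

Section Hilb.
Context {X : HilbertSpace}.

Definition hsub (x y : X) : X := hadd x (hopp y).
Definition hnorm (x : X) : R := sqrt (inner x x).

Definition hconv (u : nat -> X) (l : X) : Prop :=
  forall eps, 0 < eps -> exists N, forall n, (N <= n)%nat -> hnorm (hsub (u n) l) < eps.

Definition is_closed (S : X -> Prop) : Prop :=
  forall (u : nat -> X) (l : X), (forall n, S (u n)) -> hconv u l -> S l.

Definition closed_subspace (S : X -> Prop) : Prop :=
  S hzero /\ (forall x y, S x -> S y -> S (hadd x y)) /\
  (forall a x, S x -> S (hscal a x)) /\ is_closed S.

Definition set_sum (U V : X -> Prop) : X -> Prop :=
  fun z => exists u v, U u /\ V v /\ z = hadd u v.

(* orthogonal projection P_S x: the (unique, for S a nonempty closed convex
   set) nearest point of S to x. *)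
Definition proj (S : X -> Prop) (x : X) : X :=
  epsilon (inhabits x)
    (fun p => S p /\ forall y, S y -> hnorm (hsub x p) <= hnorm (hsub x y)).

Definition refl (S : X -> Prop) (x : X) : X :=
  hsub (hscal 2 (proj S x)) x.

Definition is_inf (A : R -> Prop) (d : R) : Prop :=
  (forall r, A r -> d <= r) /\ (forall b, (forall r, A r -> b <= r) -> b <= d).

Definition setdist (S : X -> Prop) (x : X) : R :=
  epsilon (inhabits 0) (is_inf (fun r => exists c, S c /\ r = hnorm (hsub x c))).

Definition inter_fam (m : nat) (C : nat -> X -> Prop) : X -> Prop :=
  fun x => forall i, (1 <= i <= m)%nat -> C i x.

(* max_{1 <= i <= k} d_{C_i}(x)  (distances are >= 0, so starting at 0 is harmless) *)
Fixpoint maxdist (C : nat -> X -> Prop) (x : X) (k : nat) : R :=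
  match k with
  | O => 0
  | S k' => Rmax (maxdist C x k') (setdist (C (S k')) x)
  end.

Definition bdd_lin_regular (m : nat) (C : nat -> X -> Prop) : Prop :=
  (exists c, inter_fam m C c) /\
  forall rho, 0 < rho -> exists mu, 0 < mu /\
    forall x, hnorm x <= rho -> setdist (inter_fam m C) x <= mu * maxdist C x m.

Definition cyc (m i : nat) : nat := if Nat.eqb i (S m) then 1%nat else i.

Definition Top (m : nat) (U : nat -> X -> Prop) (i : nat) (x : X) : X :=
  hsub (hadd (proj (U (cyc m (S i))) (refl (U i) x)) x) (proj (U i) x).

Definition Zset (m : nat) (U : nat -> X -> Prop) (i : nat) : X -> Prop :=
  fun x => Top m U i x = x.

Fixpoint Tcomp (m : nat) (U : nat -> X -> Prop) (k : nat) (x : X) : X :=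
  match k with
  | O => x
  | S k' => Top m U (S k') (Tcomp m U k' x)
  end.

Definition lin_conv (u : nat -> X) (xbar : X) : Prop :=
  exists c q, 0 <= c /\ 0 <= q < 1 /\ forall n, hnorm (hsub (u n) xbar) <= c * q ^ n.

End Hilb.

(* Main.v *)
Require Import Defs.
From Stdlib Require Import Reals Lra Lia ClassicalEpsilon Classical.
Open Scope R_scope.

Arguments hadd_assoc {_}. Arguments hadd_comm {_}. Arguments hadd_zero {_}. Arguments hadd_opp {_}.
Arguments hscal_assoc {_}. Arguments hscal_one {_}. Arguments hscal_distr_vec {_}. Arguments hscal_distr_scal {_}.
Arguments inner_sym {_}. Arguments inner_add_l {_}. Arguments inner_scal_l {_}. Arguments inner_pos {_}.
Arguments inner_def {_}. Arguments hcomplete {_}.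
Section Basic.
Context {X : HilbertSpace}.
Implicit Types x y z u v w : X.

Lemma inner_add_r x y z : inner x (hadd y z) = inner x y + inner x z.
Proof. rewrite inner_sym, inner_add_l, (inner_sym y), (inner_sym z). ring. Qed.
Lemma inner_scal_r a x y : inner x (hscal a y) = a * inner x y.
Proof. rewrite inner_sym, inner_scal_l, inner_sym. ring. Qed.
Lemma inner_zero_l y : inner hzero y = 0.
Proof. pose proof (inner_add_l hzero hzero y) as H. rewrite hadd_zero in H. lra. Qed.
Lemma inner_zero_r y : inner y hzero = 0.
Proof. rewrite inner_sym. apply inner_zero_l. Qed.
Lemma inner_opp_l x y : inner (hopp x) y = - inner x y.
Proof. pose proof (inner_add_l x (hopp x) y) as H. rewrite hadd_opp, inner_zero_l in H. lra. Qed.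
Lemma inner_opp_r x y : inner y (hopp x) = - inner y x.
Proof. rewrite inner_sym, inner_opp_l, inner_sym. ring. Qed.
Lemma inner_sub_l x y z : inner (hsub x y) z = inner x z - inner y z.
Proof. unfold hsub. rewrite inner_add_l, inner_opp_l. ring. Qed.
Lemma inner_sub_r x y z : inner z (hsub x y) = inner z x - inner z y.
Proof. unfold hsub. rewrite inner_add_r, inner_opp_r. ring. Qed.

Lemma sub_eq0 u v : hsub u v = hzero -> u = v.
Proof.
  intro H.
  assert (E : hadd (hsub u v) v = u).
  { unfold hsub. rewrite <- hadd_assoc, (hadd_comm (hopp v) v), hadd_opp, hadd_zero. reflexivity. }
  rewrite H, hadd_comm, hadd_zero in E. symmetry. exact E.
Qed.

Lemma vec_ext u v : (forall w, inner u w = inner v w) -> u = v.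
Proof.
  intro H. apply sub_eq0. apply inner_def.
  rewrite inner_sub_l, H. ring.
Qed.
End Basic.

Ltac isimpl := repeat (rewrite ?inner_add_l, ?inner_sub_l, ?inner_opp_l, ?inner_scal_l, ?inner_zero_l,
   ?inner_add_r, ?inner_sub_r, ?inner_opp_r, ?inner_scal_r, ?inner_zero_r).
Ltac isimplH H := revert H; isimpl; intro H.
Ltac vec := apply vec_ext; let w := fresh "w" in intro w; isimpl; first [ring | field].

Section Norms.
Context {X : HilbertSpace}.
Implicit Types x y z u v w : X.

Lemma hnorm_ge0 x : 0 <= hnorm x.
Proof. apply sqrt_pos. Qed.
Lemma hnorm_sq x : hnorm x * hnorm x = inner x x.
Proof. apply sqrt_sqrt, inner_pos. Qed.
Lemma hnorm_le_sq x y : hnorm x <= hnorm y <-> inner x x <= inner y y.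
Proof.
  split; intro H.
  - apply sqrt_le_0; try apply inner_pos. exact H.
  - apply sqrt_le_1_alt. exact H.
Qed.
Lemma hnorm_zero : hnorm (@hzero X) = 0.
Proof. unfold hnorm. rewrite inner_zero_l. apply sqrt_0. Qed.
Lemma hnorm_eq0 x : hnorm x = 0 -> x = hzero.
Proof. intro H. apply inner_def. apply sqrt_eq_0; auto using inner_pos. Qed.
Lemma hnorm_le0 x : hnorm x <= 0 -> x = hzero.
Proof. intro H. apply hnorm_eq0. pose proof (hnorm_ge0 x). lra. Qed.

Lemma cs_sq x y : inner x y * inner x y <= inner x x * inner y y.
Proof.
  destruct (Req_dec (inner y y) 0) as [H0|H0].
  - apply inner_def in H0. subst. rewrite !inner_zero_r. lra.
  - pose proof (inner_pos y). set (t := inner x y / inner y y).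
    assert (Ht : t * inner y y = inner x y) by (unfold t; field; auto).
    pose proof (inner_pos (hsub x (hscal t y))) as P. revert P; isimpl; intro P.
    rewrite (inner_sym y x) in P. nra.
Qed.

Lemma sq_le a b : 0 <= b -> a * a <= b * b -> a <= b.
Proof. intros. nra. Qed.

Lemma cs x y : inner x y <= hnorm x * hnorm y.
Proof.
  pose proof (cs_sq x y). rewrite <- (hnorm_sq x), <- (hnorm_sq y) in H.
  pose proof (hnorm_ge0 x); pose proof (hnorm_ge0 y).
  apply sq_le. nra. nra.
Qed.


Lemma hnorm_triangle x y : hnorm (hadd x y) <= hnorm x + hnorm y.
Proof.
  apply sq_le. pose proof (hnorm_ge0 x); pose proof (hnorm_ge0 y); lra.
  rewrite hnorm_sq. isimpl. rewrite (inner_sym y x).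
  pose proof (cs x y). pose proof (hnorm_sq x). pose proof (hnorm_sq y). nra.
Qed.

Lemma hnorm_scal a x : hnorm (hscal a x) = Rabs a * hnorm x.
Proof.
  unfold hnorm. isimpl. rewrite <- Rmult_assoc, sqrt_mult_alt.
  - f_equal. rewrite <- sqrt_Rsqr_abs. unfold Rsqr. reflexivity.
  - nra.
Qed.

Lemma hnorm_opp x : hnorm (hopp x) = hnorm x.
Proof. unfold hnorm. isimpl. f_equal. ring. Qed.

Lemma hnorm_sub_sym x y : hnorm (hsub x y) = hnorm (hsub y x).
Proof. unfold hnorm. f_equal. isimpl. rewrite (inner_sym x y). ring. Qed.

Lemma hnorm_sub_tri x y z : hnorm (hsub x z) <= hnorm (hsub x y) + hnorm (hsub y z).
Proof.
  replace (hsub x z) with (hadd (hsub x y) (hsub y z)) by vec.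
  apply hnorm_triangle.
Qed.

Lemma hnorm_sub0 x : hnorm (hsub x hzero) = hnorm x.
Proof. f_equal. vec. Qed.

Lemma hsub_self x : hsub x x = hzero.
Proof. vec. Qed.
End Norms.

Lemma fchoice {A B : Type} (b : B) (P : A -> B -> Prop) :
  (forall a, exists y, P a y) -> exists f, forall a, P a (f a).
Proof.
  intro H. exists (fun a => epsilon (inhabits b) (P a)). intro a.
  apply epsilon_spec. apply H.
Qed.

Lemma pow_small q eps : 0 <= q < 1 -> 0 < eps -> exists N, forall n, (N <= n)%nat -> q ^ n < eps.
Proof.
  intros Hq He. destruct (pow_lt_1_zero q) with (y := eps) as [N HN]; auto.
  rewrite Rabs_right; lra.
  exists N. intros n Hn. specialize (HN n Hn). rewrite Rabs_right in HN; auto.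
  apply Rle_ge, pow_le; lra.
Qed.

Lemma le_eps a b : (forall eps, 0 < eps -> a <= b + eps) -> a <= b.
Proof.
  intro H. destruct (Rle_dec a b) as [h|h]; auto.
  specialize (H ((a - b)/2)). lra.
Qed.

Lemma le_lim a b c q : 0 <= q < 1 -> (forall n, a <= b + c * q ^ n) -> a <= b.
Proof.
  intros Hq H. apply le_eps. intros eps He.
  destruct (pow_small q (eps / (Rabs c + 1)) Hq) as [N HN].
  { apply Rdiv_lt_0_compat; auto. pose proof (Rabs_pos c); lra. }
  specialize (HN N (le_n _)). specialize (H N).
  assert (c * q ^ N <= eps).
  { pose proof (Rabs_pos c). pose proof (pow_le q N ltac:(lra)).
    apply Rmult_lt_compat_l with (r := Rabs c + 1) in HN; [|lra].
    replace ((Rabs c + 1) * (eps / (Rabs c + 1))) with eps in HN by (field; lra).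
    assert (c <= Rabs c) by apply RRle_abs. nra. }
  lra.
Qed.

Lemma pow_mono_dec q n k : 0 <= q <= 1 -> (n <= k)%nat -> q ^ k <= q ^ n.
Proof.
  intros Hq Hnk. replace k with (n + (k - n))%nat by lia.
  rewrite pow_add. pose proof (pow_le q n ltac:(lra)).
  assert (q ^ (k - n) <= 1).
  { clear Hnk. induction (k - n)%nat; simpl. lra. pose proof (pow_le q n0 ltac:(lra)). nra. }
  nra.
Qed.

Section Lim.
Context {X : HilbertSpace}.
Implicit Types x y z u v w : X.

Lemma lim_bound (u : nat -> X) l y M N :
  hconv u l -> (forall n, (N <= n)%nat -> hnorm (hsub (u n) y) <= M) -> hnorm (hsub l y) <= M.
Proof.
  intros Hc Hb. apply le_eps. intros eps He.
  destruct (Hc eps He) as [N1 HN1].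
  specialize (HN1 (max N N1) ltac:(lia)). specialize (Hb (max N N1) ltac:(lia)).
  pose proof (hnorm_sub_tri l (u (max N N1)) y). rewrite hnorm_sub_sym in HN1. lra.
Qed.

Lemma cauchy_lim (u : nat -> X) c q : 0 <= q < 1 ->
  (forall n k, (n <= k)%nat -> hnorm (hsub (u k) (u n)) <= c * q ^ n) ->
  exists l, hconv u l /\ forall n, hnorm (hsub (u n) l) <= c * q ^ n.
Proof.
  intros Hq H.
  assert (Hcv : exists l, hconv u l).
  { apply hcomplete. intros eps He.
    destruct (pow_small q (eps / (Rabs c + 1)) Hq) as [N HN].
    { apply Rdiv_lt_0_compat; auto. pose proof (Rabs_pos c); lra. }
    exists N. intros n k Hn Hk.
    assert (forall a b, (N <= a)%nat -> (a <= b)%nat -> hnorm (hsub (u b) (u a)) < eps).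
    { intros a b Ha Hab. specialize (H a b Hab). specialize (HN a Ha).
      pose proof (Rabs_pos c). pose proof (pow_le q a ltac:(lra)).
      apply Rmult_lt_compat_l with (r := Rabs c + 1) in HN; [|lra].
      replace ((Rabs c + 1) * (eps / (Rabs c + 1))) with eps in HN by (field; lra).
      assert (c <= Rabs c) by apply RRle_abs. nra. }
    change (hnorm (hsub (u n) (u k)) < eps).
    destruct (Nat.le_ge_cases n k).
    - rewrite hnorm_sub_sym. auto.
    - auto. }
  destruct Hcv as [l Hl]. exists l. split; auto.
  intro n. rewrite hnorm_sub_sym.
  apply lim_bound with (u := u) (N := n); auto.
Qed.

Lemma hconv_unique_zero (u : nat -> X) l : hconv u l -> forall y c q, 0 <= q < 1 ->
  (forall n, hnorm (hsub (u n) y) <= c * q ^ n) -> l = y.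
Proof.
  intros Hc y c q Hq Hb. apply sub_eq0. apply hnorm_le0.
  apply le_eps. intros eps He.
  destruct (Hc eps He) as [N HN].
  apply le_lim with (c := c) (q := q); auto. intro n.
  specialize (HN (max N n) ltac:(lia)). pose proof (Hb n) as Hbn. specialize (Hb (max N n)).
  pose proof (hnorm_sub_tri l (u (max N n)) y). rewrite hnorm_sub_sym in HN.
  pose proof (pow_mono_dec q n (max N n) ltac:(lra) ltac:(lia)).
  assert (c * q ^ (max N n) <= c * q ^ n).
  { destruct (Rle_dec 0 c).
    - apply Rmult_le_compat_l; auto.
    - pose proof (hnorm_ge0 (hsub (u n) y)). 
      pose proof (pow_le q n ltac:(lra)). pose proof (pow_le q (max N n) ltac:(lra)).
      assert (q ^ n = 0) by nra. nra. }
  lra.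
Qed.
End Lim.

Lemma inf_exists (E : R -> Prop) : (exists r, E r) -> (forall r, E r -> 0 <= r) -> exists d, is_inf E d.
Proof.
  intros [r0 Hr0] Hpos.
  destruct (completeness (fun r => E (- r))) as [M [HM1 HM2]].
  - exists 0. intros r Hr. specialize (Hpos _ Hr). lra.
  - exists (- r0). rewrite Ropp_involutive. auto.
  - exists (- M). split.
    + intros r Hr. assert (- r <= M). { apply HM1. rewrite Ropp_involutive. auto. } lra.
    + intros b Hb. assert (M <= - b). { apply HM2. intros r Hr. specialize (Hb _ Hr). lra. } lra.
Qed.

Section Proj.
Context {X : HilbertSpace}.
Implicit Types x y z u v w : X.
Implicit Types S : X -> Prop.

Lemma cs_zero S : closed_subspace S -> S hzero.
Proof. intros [H _]. exact H. Qed.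
Lemma cs_add S x y : closed_subspace S -> S x -> S y -> S (hadd x y).
Proof. intros [_ [H _]]. auto. Qed.
Lemma cs_scal S a x : closed_subspace S -> S x -> S (hscal a x).
Proof. intros [_ [_ [H _]]]. auto. Qed.
Lemma cs_closed S : closed_subspace S -> is_closed S.
Proof. intros [_ [_ [_ H]]]. auto. Qed.
Lemma cs_sub S x y : closed_subspace S -> S x -> S y -> S (hsub x y).
Proof.
  intros HS Hx Hy. replace (hsub x y) with (hadd x (hscal (-1) y)) by vec.
  apply cs_add; auto. apply cs_scal; auto.
Qed.

Lemma proj_exists S x : closed_subspace S ->
  exists p, S p /\ forall y, S y -> hnorm (hsub x p) <= hnorm (hsub x y).
Proof.
  intro HS.
  destruct (inf_exists (fun r => exists s, S s /\ r = inner (hsub x s) (hsub x s))) as [d [Hd1 Hd2]].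
  { exists (inner (hsub x hzero) (hsub x hzero)). exists hzero. split; auto. apply cs_zero; auto. }
  { intros r [s [_ ->]]. apply inner_pos. }
  assert (Happ : forall n : nat, exists s, S s /\ inner (hsub x s) (hsub x s) < d + (/4) ^ n).
  { intro n. apply NNPP. intro Hn.
    assert (d + (/4)^n <= d).
    { apply Hd2. intros r [s [Hs ->]]. apply Rnot_lt_le. intro. apply Hn. eauto. }
    pose proof (pow_lt (/4) n ltac:(lra)). lra. }
  destruct (fchoice hzero _ Happ) as [s Hs].
  assert (Hd0 : 0 <= d).
  { apply Hd2. intros r [s' [_ ->]]. apply inner_pos. }
  destruct (cauchy_lim s 2 (/2)) as [l [Hl1 Hl2]].
  { lra. }
  { intros n k Hnk. destruct (Hs n) as [Sn Hn]. destruct (Hs k) as [Sk Hk].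
    set (mid := hscal (/2) (hadd (s n) (s k))).
    assert (Hm : d <= inner (hsub x mid) (hsub x mid)).
    { apply Hd1. exists mid. split; auto. unfold mid. apply cs_scal; auto. apply cs_add; auto. }
    assert (E1 : hsub (s k) (s n) = hsub (hsub x (s n)) (hsub x (s k))) by vec.
    assert (E2 : hsub x mid = hscal (/2) (hadd (hsub x (s n)) (hsub x (s k)))) by (unfold mid; vec).
    rewrite E2 in Hm. rewrite E1.
    set (a := hsub x (s n)) in *. set (b := hsub x (s k)) in *.
    apply sq_le. pose proof (pow_le (/2) n). nra.
    rewrite hnorm_sq. revert Hm. isimpl. rewrite (inner_sym b a). intro Hm.
    pose proof (pow_mono_dec (/4) n k ltac:(lra) Hnk).
    assert ((/4)^n = (/2)^n * (/2)^n) by (rewrite <- Rpow_mult_distr; f_equal; field).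
    nra. }
  exists l. split.
  - apply (cs_closed S HS s l); auto. intro n. apply Hs.
  - intros y Hy.
    assert (Hb : forall n, hnorm (hsub x l) <= sqrt d + 3 * (/2) ^ n).
    { intro n. destruct (Hs n) as [_ Hn].
      pose proof (hnorm_sub_tri x (s n) l). specialize (Hl2 n).
      assert (hnorm (hsub x (s n)) <= sqrt d + (/2)^n).
      { apply sq_le. pose proof (sqrt_pos d). pose proof (pow_le (/2) n). lra.
        rewrite hnorm_sq. pose proof (sqrt_sqrt d Hd0). pose proof (sqrt_pos d).
        pose proof (pow_le (/2) n ltac:(lra)).
        assert ((/4)^n = (/2)^n * (/2)^n) by (rewrite <- Rpow_mult_distr; f_equal; field).
        nra. }
      lra. }
    assert (hnorm (hsub x l) <= sqrt d).
    { apply le_lim with (c := 3) (q := /2). lra. auto. }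
    assert (sqrt d <= hnorm (hsub x y)).
    { apply sqrt_le_1_alt. apply Hd1. eauto. }
    lra.
Qed.

Lemma proj_spec S x : closed_subspace S ->
  S (proj S x) /\ forall y, S y -> hnorm (hsub x (proj S x)) <= hnorm (hsub x y).
Proof.
  intro HS. unfold proj. apply epsilon_spec. apply proj_exists; auto.
Qed.

Lemma proj_in S x : closed_subspace S -> S (proj S x).
Proof. intro HS. apply proj_spec; auto. Qed.

Lemma proj_orth S x s : closed_subspace S -> S s -> inner (hsub x (proj S x)) s = 0.
Proof.
  intros HS Hs. destruct (proj_spec S x HS) as [Hp Hmin].
  set (p := proj S x) in *. set (e := hsub x p).
  set (c := inner e s). set (n := inner s s).
  assert (Hn : 0 <= n) by apply inner_pos.
  set (t := c / (n + 1)).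
  assert (Hn1 : n + 1 <> 0) by (apply Rgt_not_eq; lra).
  assert (Ht : c = t * (n + 1)) by (unfold t; field; exact Hn1).
  specialize (Hmin (hadd p (hscal t s))).
  assert (S (hadd p (hscal t s))) by (apply cs_add; auto; apply cs_scal; auto).
  specialize (Hmin H). apply hnorm_le_sq in Hmin.
  replace (hsub x (hadd p (hscal t s))) with (hsub e (hscal t s)) in Hmin by (unfold e; vec).
  change (hsub x p) with e in Hmin. revert Hmin. isimpl. rewrite (inner_sym s e). fold c n. intro Hmin.
  assert (t * t * (n + 2) <= 0) by nra.
  assert (t = 0) by nra. fold c. rewrite Ht, H1. ring.
Qed.

Lemma proj_unique S x p : closed_subspace S -> S p ->
  (forall s, S s -> inner (hsub x p) s = 0) -> proj S x = p.
Proof.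
  intros HS Hp Ho. apply sub_eq0. apply inner_def.
  set (v := hsub (proj S x) p).
  assert (Sv : S v) by (apply cs_sub; auto; apply proj_in; auto).
  replace (inner v v) with (inner (hsub (hsub x p) (hsub x (proj S x))) v) by (f_equal; unfold v; vec).
  rewrite inner_sub_l, Ho, proj_orth; auto. ring.
Qed.

Lemma proj_self S x : closed_subspace S -> S x -> proj S x = x.
Proof. intros HS Hx. apply proj_unique; auto. intros. rewrite hsub_self. apply inner_zero_l. Qed.

Lemma proj_sub S x y : closed_subspace S -> proj S (hsub x y) = hsub (proj S x) (proj S y).
Proof.
  intro HS. apply proj_unique; auto. apply cs_sub; auto; apply proj_in; auto.
  intros s Hs. pose proof (proj_orth S x s HS Hs). pose proof (proj_orth S y s HS Hs).
  revert H H0. isimpl. lra.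
Qed.

Lemma proj_add S x y : closed_subspace S -> proj S (hadd x y) = hadd (proj S x) (proj S y).
Proof.
  intro HS. apply proj_unique; auto. apply cs_add; auto; apply proj_in; auto.
  intros s Hs. pose proof (proj_orth S x s HS Hs). pose proof (proj_orth S y s HS Hs).
  revert H H0. isimpl. lra.
Qed.

Lemma proj_scal S a x : closed_subspace S -> proj S (hscal a x) = hscal a (proj S x).
Proof.
  intro HS. apply proj_unique; auto. apply cs_scal; auto; apply proj_in; auto.
  intros s Hs. pose proof (proj_orth S x s HS Hs).
  revert H. isimpl. intro H. replace (a * inner x s - a * inner (proj S x) s) with (a * (inner x s - inner (proj S x) s)) by ring.
  rewrite H. ring.
Qed.

Lemma setdist_spec S x : (exists c, S c) ->
  is_inf (fun r => exists c, S c /\ r = hnorm (hsub x c)) (setdist S x).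
Proof.
  intros [c0 Hc0]. unfold setdist. apply epsilon_spec. apply inf_exists.
  - exists (hnorm (hsub x c0)). eauto.
  - intros r [c [_ ->]]. apply hnorm_ge0.
Qed.

Lemma setdist_le S x c : S c -> setdist S x <= hnorm (hsub x c).
Proof. intro Hc. apply (setdist_spec S x (ex_intro _ c Hc)). eauto. Qed.

Lemma setdist_ge0 S x : (exists c, S c) -> 0 <= setdist S x.
Proof. intro H. apply (setdist_spec S x H). intros r [c [_ ->]]. apply hnorm_ge0. Qed.

Lemma setdist_approx S x eps : (exists c, S c) -> 0 < eps ->
  exists c, S c /\ hnorm (hsub x c) < setdist S x + eps.
Proof.
  intros H He. apply NNPP. intro Hn.
  assert (setdist S x + eps <= setdist S x).
  { apply (setdist_spec S x H). intros r [c [Hc ->]]. apply Rnot_lt_le. intro. apply Hn. eauto. }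
  lra.
Qed.
End Proj.

Section OM.
Context {X : HilbertSpace}.
Implicit Types x y z u v w : X.
Variables A B : X -> Prop.
Hypothesis HA : closed_subspace A.
Hypothesis HB : closed_subspace B.
Hypothesis HW : is_closed (set_sum A B).

Let W := set_sum A B.

Lemma W_cs : closed_subspace W.
Proof.
  split; [|split; [|split]].
  - exists hzero, hzero. split; [apply cs_zero; auto|split; [apply cs_zero; auto|]]. vec.
  - intros x y [a1 [b1 [H1 [H2 ->]]]] [a2 [b2 [H3 [H4 ->]]]].
    exists (hadd a1 a2), (hadd b1 b2). split; [apply cs_add; auto|split; [apply cs_add; auto|]]. vec.
  - intros c x [a1 [b1 [H1 [H2 ->]]]].
    exists (hscal c a1), (hscal c b1). split; [apply cs_scal; auto|split; [apply cs_scal; auto|]]. vec.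
  - exact HW.
Qed.

Definition Fr (M : R) w := forall eps, 0 < eps -> exists a b, A a /\ B b /\ hnorm a <= M /\ hnorm b <= M /\
  hnorm (hsub w (hadd a b)) < eps.

Definition Good (n : nat) (c : X) (r : R) (p : X * R) : Prop :=
  W (fst p) /\ 0 < snd p /\ snd p <= r / 2 /\ hnorm (hsub (fst p) c) + snd p <= r /\
  (forall y, hnorm (hsub y (fst p)) <= snd p -> ~ Fr (INR n) y).

Lemma baire : exists n w0 r, W w0 /\ 0 < r /\ forall w, W w -> hnorm (hsub w w0) < r -> Fr (INR n) w.
Proof.
  apply NNPP. intro Hno.
  assert (H : forall n c r, W c -> 0 < r -> exists p, Good n c r p).
  { intros n c r Hc Hr.
    assert (exists w, W w /\ hnorm (hsub w c) < r /\ ~ Fr (INR n) w) as [w [Hw [Hwc HF]]].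
    { apply NNPP. intro H1. apply Hno. exists n, c, r. repeat split; auto.
      intros w Hw Hwc. apply NNPP. intro H2. apply H1. eauto. }
    unfold Fr in HF. apply not_all_ex_not in HF. destruct HF as [eps HF].
    apply imply_to_and in HF. destruct HF as [He HF].
    set (r' := Rmin (eps / 2) ((r - hnorm (hsub w c)) / 2)).
    assert (r'1 : r' <= eps / 2) by apply Rmin_l.
    assert (r'2 : r' <= (r - hnorm (hsub w c)) / 2) by apply Rmin_r.
    assert (r'0 : 0 < r') by (apply Rmin_glb_lt; lra).
    exists (w, r'). unfold Good; simpl. repeat split; auto.
    - pose proof (hnorm_ge0 (hsub w c)). lra.
    - lra.
    - intros y Hy HFy. destruct (HFy (eps / 2) ltac:(lra)) as [a [b [Ha [Hb [Ha' [Hb' Hab]]]]]].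
      apply HF. exists a, b. repeat split; auto.
      pose proof (hnorm_sub_tri w y (hadd a b)). rewrite hnorm_sub_sym in Hy. lra. }
  set (step := fun n (p : X * R) => epsilon (inhabits p) (Good n (fst p) (snd p))).
  set (bseq := fix bseq k := match k with O => (@hzero X, 1) | S k => step k (bseq k) end).
  assert (GS : forall k, W (fst (bseq k)) -> 0 < snd (bseq k) -> Good k (fst (bseq k)) (snd (bseq k)) (bseq (S k))).
  { intros k h1 h2. change (bseq (S k)) with (step k (bseq k)). unfold step.
    apply epsilon_spec. apply H; auto. }
  assert (Inv : forall k, W (fst (bseq k)) /\ 0 < snd (bseq k) /\ snd (bseq k) <= (/2) ^ k /\
     Good k (fst (bseq k)) (snd (bseq k)) (bseq (S k))).
  { induction k.
    - assert (W (fst (bseq 0%nat)) /\ 0 < snd (bseq 0%nat) /\ snd (bseq 0%nat) <= (/2)^0).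
      { simpl. split; [apply cs_zero, W_cs|]. lra. }
      destruct H0 as [h1 [h2 h3]]. repeat split; auto.
      all: apply GS; auto.
    - destruct IHk as [h1 [h2 [h3 h4]]].
      pose proof h4 as [g1 [g2 [g3 [g4 g5]]]].
      assert (Hsk : W (fst (bseq (S k))) /\ 0 < snd (bseq (S k)) /\ snd (bseq (S k)) <= (/2) ^ (S k)).
      { split; auto. split; auto. simpl pow. lra. }
      destruct Hsk as [s1 [s2 s3]]. repeat split; auto.
      all: apply GS; auto. }
  assert (Nest : forall k j, hnorm (hsub (fst (bseq (k + j)%nat)) (fst (bseq k))) + snd (bseq (k + j)%nat) <= snd (bseq k)).
  { intros k j. induction j.
    - rewrite Nat.add_0_r, hsub_self, hnorm_zero. lra.
    - replace (k + S j)%nat with (S (k + j)) by lia.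
      destruct (Inv (k + j)%nat) as [_ [_ [_ [_ [_ [_ [g4 _]]]]]]].
      pose proof (hnorm_sub_tri (fst (bseq (S (k + j)))) (fst (bseq (k + j)%nat)) (fst (bseq k))). lra. }
  destruct (cauchy_lim (fun k => fst (bseq k)) 1 (/2)) as [l [Hl1 Hl2]].
  { lra. }
  { intros n k Hnk. replace k with (n + (k - n))%nat by lia.
    pose proof (Nest n (k - n)%nat). destruct (Inv (n + (k - n))%nat) as [_ [h _]].
    destruct (Inv n) as [_ [_ [h' _]]]. lra. }
  assert (Wl : W l).
  { apply (cs_closed W W_cs (fun k => fst (bseq k)) l); auto. intro k. apply Inv. }
  assert (NF : forall k, ~ Fr (INR k) l).
  { intro k. destruct (Inv k) as [_ [_ [_ [_ [_ [_ [_ g5]]]]]]]. apply g5.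
    apply lim_bound with (u := fun k => fst (bseq k)) (N := S k); auto.
    intros n Hn. replace n with (S k + (n - S k))%nat by lia.
    pose proof (Nest (S k) (n - S k)%nat). destruct (Inv (S k + (n - S k))%nat) as [_ [h _]]. lra. }
  destruct Wl as [a [b [Ha [Hb Hl]]]].
  destruct (INR_unbounded (Rmax (hnorm a) (hnorm b))) as [N HN].
  apply (NF N). intros eps He. exists a, b. repeat split; auto.
  - pose proof (Rmax_l (hnorm a) (hnorm b)). lra.
  - pose proof (Rmax_r (hnorm a) (hnorm b)). lra.
  - rewrite Hl, hsub_self, hnorm_zero. auto.
Qed.

Lemma hnorm_sub_le x y : hnorm (hsub x y) <= hnorm x + hnorm y.
Proof. unfold hsub. rewrite <- (hnorm_opp y). apply hnorm_triangle. Qed.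

Lemma approx : exists C, 0 <= C /\ forall w, W w -> forall eps, 0 < eps ->
  exists a b, A a /\ B b /\ hnorm a <= C * hnorm w /\ hnorm b <= C * hnorm w /\ hnorm (hsub w (hadd a b)) < eps.
Proof.
  destruct baire as [n [w0 [r [Hw0 [Hr Hb]]]]].
  pose proof (pos_INR n) as Hn.
  assert (S2 : forall w, W w -> hnorm w < r -> Fr (2 * INR n) w).
  { intros w Hw Hwr eps He.
    assert (F1 : Fr (INR n) (hadd w0 w)).
    { apply Hb. apply cs_add; auto. apply W_cs. replace (hsub (hadd w0 w) w0) with w by vec. auto. }
    assert (F2 : Fr (INR n) w0).
    { apply Hb; auto. rewrite hsub_self, hnorm_zero. auto. }
    destruct (F1 (eps/2) ltac:(lra)) as [a1 [b1 [Ha1 [Hb1 [Na1 [Nb1 E1]]]]]].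
    destruct (F2 (eps/2) ltac:(lra)) as [a2 [b2 [Ha2 [Hb2 [Na2 [Nb2 E2]]]]]].
    exists (hsub a1 a2), (hsub b1 b2). repeat split.
    - apply cs_sub; auto.
    - apply cs_sub; auto.
    - pose proof (hnorm_sub_le a1 a2). lra.
    - pose proof (hnorm_sub_le b1 b2). lra.
    - replace (hsub w (hadd (hsub a1 a2) (hsub b1 b2))) with
        (hsub (hsub (hadd w0 w) (hadd a1 b1)) (hsub w0 (hadd a2 b2))) by vec.
      pose proof (hnorm_sub_le (hsub (hadd w0 w) (hadd a1 b1)) (hsub w0 (hadd a2 b2))). lra. }
  exists (4 * INR n / r). split.
  { apply Rmult_le_pos. lra. left. apply Rinv_0_lt_compat. auto. }
  intros w Hw eps He.
  destruct (Req_dec (hnorm w) 0) as [H0|H0].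
  - apply hnorm_eq0 in H0. subst w. exists hzero, hzero. repeat split.
    all: try (exact (cs_zero A HA)); try (exact (cs_zero B HB)).
    all: try (rewrite hnorm_zero; lra).
    replace (hsub hzero (hadd (@hzero X) hzero)) with (@hzero X) by vec. rewrite hnorm_zero. auto.
  - set (h := hnorm w) in *. assert (Hh : 0 < h) by (pose proof (hnorm_ge0 w); fold h in H; lra).
    set (t := r / (2 * h)).
    assert (Ht : 0 < t) by (unfold t; apply Rdiv_lt_0_compat; lra).
    assert (Htw : hnorm (hscal t w) < r).
    { rewrite hnorm_scal, Rabs_right by lra. fold h. unfold t. field_simplify; lra. }
    destruct (S2 (hscal t w) ltac:(apply cs_scal; auto; apply W_cs) Htw (t * eps) ltac:(nra))
      as [a [b [Ha [Hb' [Na [Nb E]]]]]].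
    exists (hscal (/t) a), (hscal (/t) b).
    assert (It : /t = 2 * h / r) by (unfold t; field; lra).
    assert (It0 : 0 < /t) by (apply Rinv_0_lt_compat; auto).
    repeat split.
    + apply cs_scal; auto.
    + apply cs_scal; auto.
    + rewrite hnorm_scal, Rabs_right by lra. rewrite It. rewrite It in It0.
      replace (4 * INR n / r * h) with (2 * h / r * (2 * INR n)) by (field; lra).
      apply Rmult_le_compat_l; lra.
    + rewrite hnorm_scal, Rabs_right by lra. rewrite It. rewrite It in It0.
      replace (4 * INR n / r * h) with (2 * h / r * (2 * INR n)) by (field; lra).
      apply Rmult_le_compat_l; lra.
    + replace (hsub w (hadd (hscal (/ t) a) (hscal (/ t) b))) with (hscal (/t) (hsub (hscal t w) (hadd a b))).
      2: { apply vec_ext. intro u. isimpl. field. lra. }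
      rewrite hnorm_scal, Rabs_right by lra.
      apply Rmult_lt_compat_l with (r := /t) in E; auto.
      replace (/ t * (t * eps)) with eps in E by (field; lra). exact E.
Qed.

Lemma open_mapping : exists K, 0 <= K /\ forall w, W w ->
  exists a b, A a /\ B b /\ w = hadd a b /\ hnorm a <= K * hnorm w /\ hnorm b <= K * hnorm w.
Proof.
  destruct approx as [C [HC Hap]].
  exists (2 * C). split. lra.
  intros w Hw.
  destruct (Req_dec (hnorm w) 0) as [H0|H0].
  { apply hnorm_eq0 in H0. subst w. exists hzero, hzero. repeat split.
    all: try (exact (cs_zero A HA)); try (exact (cs_zero B HB)).
    all: try (rewrite hnorm_zero; lra).
    vec. }
  set (h := hnorm w) in *. assert (Hh : 0 < h) by (pose proof (hnorm_ge0 w); fold h in H; lra).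
  set (P := fun (k : nat) v (p : X * X) => A (fst p) /\ B (snd p) /\ hnorm (fst p) <= C * hnorm v /\ hnorm (snd p) <= C * hnorm v /\ hnorm (hsub v (hadd (fst p) (snd p))) < h * (/2) ^ (S k)).
  set (ch := fun k v => epsilon (inhabits (@hzero X, @hzero X)) (P k v)).
  set (wseq := fix wseq k := match k with O => w | S k => hsub (wseq k) (hadd (fst (ch k (wseq k))) (snd (ch k (wseq k)))) end).
  assert (Inv : forall k, W (wseq k) /\ hnorm (wseq k) <= h * (/2) ^ k /\ P k (wseq k) (ch k (wseq k))).
  { assert (G : forall k, W (wseq k) -> P k (wseq k) (ch k (wseq k))).
    { intros k Hk. unfold ch. apply epsilon_spec.
      destruct (Hap (wseq k) Hk (h * (/2) ^ (S k))) as [a [b Hab]].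
      { apply Rmult_lt_0_compat; auto. apply pow_lt; lra. }
      exists (a, b). exact Hab. }
    induction k.
    - assert (W (wseq 0%nat)) by exact Hw. repeat split; auto. simpl. fold h. lra.
      all: apply G; auto.
    - destruct IHk as [h1 [h2 h3]]. pose proof h3 as [g1 [g2 [g3 [g4 g5]]]].
      assert (W (wseq (S k))).
      { change (W (hsub (wseq k) (hadd (fst (ch k (wseq k))) (snd (ch k (wseq k)))))).
        apply cs_sub; auto. apply W_cs. apply cs_add. apply W_cs.
        exists (fst (ch k (wseq k))), hzero. repeat split; auto. first [exact (cs_zero A HA) | exact (cs_zero B HB)]. vec.
        exists hzero, (snd (ch k (wseq k))). repeat split; auto. first [exact (cs_zero A HA) | exact (cs_zero B HB)]. vec. }
      repeat split; auto.
      change (hnorm (hsub (wseq k) (hadd (fst (ch k (wseq k))) (snd (ch k (wseq k))))) <= h * (/2) ^ (S k)). lra.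
      all: apply G; auto. }
  set (ak := fun k => fst (ch k (wseq k))). set (bk := fun k => snd (ch k (wseq k))).
  set (SA := fix SA n := match n with O => @hzero X | S n => hadd (SA n) (ak n) end).
  set (SB := fix SB n := match n with O => @hzero X | S n => hadd (SB n) (bk n) end).
  assert (Hak : forall k, A (ak k) /\ hnorm (ak k) <= C * h * (/2) ^ k).
  { intro k. destruct (Inv k) as [_ [h2 [g1 [_ [g3 _]]]]]. split; auto.
    unfold ak. pose proof (Rmult_le_compat_l C _ _ HC h2). lra. }
  assert (Hbk : forall k, B (bk k) /\ hnorm (bk k) <= C * h * (/2) ^ k).
  { intro k. destruct (Inv k) as [_ [h2 [_ [g2 [_ [g4 _]]]]]]. split; auto.
    unfold bk. pose proof (Rmult_le_compat_l C _ _ HC h2). lra. }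
  assert (HSA : forall n, A (SA n)).
  { induction n; simpl. apply cs_zero; auto. apply cs_add; auto. apply Hak. }
  assert (HSB : forall n, B (SB n)).
  { induction n; simpl. apply cs_zero; auto. apply cs_add; auto. apply Hbk. }
  assert (Dec : forall n, w = hadd (hadd (SA n) (SB n)) (wseq n)).
  { induction n.
    - simpl. vec.
    - change (w = hadd (hadd (hadd (SA n) (ak n)) (hadd (SB n) (bk n))) (hsub (wseq n) (hadd (ak n) (bk n)))).
      rewrite IHn at 1. vec. }
  assert (GA : forall n j, hnorm (hsub (SA (n + j)%nat) (SA n)) <= 2 * C * h * (/2) ^ n - 2 * C * h * (/2) ^ (n + j)).
  { intros n j. induction j.
    - rewrite Nat.add_0_r, hsub_self, hnorm_zero. lra.
    - replace (n + S j)%nat with (S (n + j)) by lia.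
      change (SA (S (n + j))) with (hadd (SA (n + j)%nat) (ak (n + j)%nat)).
      replace (hsub (hadd (SA (n + j)%nat) (ak (n + j)%nat)) (SA n)) with (hadd (hsub (SA (n + j)%nat) (SA n)) (ak (n + j)%nat)) by vec.
      pose proof (hnorm_triangle (hsub (SA (n + j)%nat) (SA n)) (ak (n + j)%nat)).
      destruct (Hak (n + j)%nat) as [_ Hk]. simpl pow. lra. }
  assert (GB : forall n j, hnorm (hsub (SB (n + j)%nat) (SB n)) <= 2 * C * h * (/2) ^ n - 2 * C * h * (/2) ^ (n + j)).
  { intros n j. induction j.
    - rewrite Nat.add_0_r, hsub_self, hnorm_zero. lra.
    - replace (n + S j)%nat with (S (n + j)) by lia.
      change (SB (S (n + j))) with (hadd (SB (n + j)%nat) (bk (n + j)%nat)).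
      replace (hsub (hadd (SB (n + j)%nat) (bk (n + j)%nat)) (SB n)) with (hadd (hsub (SB (n + j)%nat) (SB n)) (bk (n + j)%nat)) by vec.
      pose proof (hnorm_triangle (hsub (SB (n + j)%nat) (SB n)) (bk (n + j)%nat)).
      destruct (Hbk (n + j)%nat) as [_ Hk]. simpl pow. lra. }
  destruct (cauchy_lim SA (2 * C * h) (/2)) as [a [Ha1 Ha2]].
  { lra. }
  { intros n k Hnk. replace k with (n + (k - n))%nat by lia. pose proof (GA n (k - n)%nat).
    pose proof (pow_le (/2) (n + (k - n))). assert (0 <= 2 * C * h * (/2) ^ (n + (k - n))) by (apply Rmult_le_pos; nra). lra. }
  destruct (cauchy_lim SB (2 * C * h) (/2)) as [b [Hb1 Hb2]].
  { lra. }
  { intros n k Hnk. replace k with (n + (k - n))%nat by lia. pose proof (GB n (k - n)%nat).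
    pose proof (pow_le (/2) (n + (k - n))). assert (0 <= 2 * C * h * (/2) ^ (n + (k - n))) by (apply Rmult_le_pos; nra). lra. }
  exists a, b. repeat split.
  - apply (cs_closed A HA SA a); auto.
  - apply (cs_closed B HB SB b); auto.
  - apply sub_eq0. apply hnorm_le0.
    apply le_lim with (c := 4 * C * h + h) (q := /2). lra.
    intro n. specialize (Dec n).
    replace (hsub w (hadd a b)) with (hadd (hadd (hsub (SA n) a) (hsub (SB n) b)) (wseq n)).
    2: { clear -Dec. revert Dec. generalize (SA n) (SB n) (wseq n). intros s1 s2 s3 Dec. subst w. vec. }
    pose proof (hnorm_triangle (hadd (hsub (SA n) a) (hsub (SB n) b)) (wseq n)).
    pose proof (hnorm_triangle (hsub (SA n) a) (hsub (SB n) b)).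
    specialize (Ha2 n). specialize (Hb2 n). destruct (Inv n) as [_ [h2 _]]. lra.
  - specialize (Ha2 0%nat). simpl in Ha2. rewrite hnorm_sub_sym, hnorm_sub0 in Ha2. fold h. lra.
  - specialize (Hb2 0%nat). simpl in Hb2. rewrite hnorm_sub_sym, hnorm_sub0 in Hb2. fold h. lra.
Qed.
End OM.

Section DR.
Context {X : HilbertSpace}.
Implicit Types x y z u v w : X.
Variables A B : X -> Prop.
Hypothesis HA : closed_subspace A.
Hypothesis HB : closed_subspace B.

Definition DR x := hsub (hadd (proj B (refl A x)) x) (proj A x).

Lemma DR_sub x y : DR (hsub x y) = hsub (DR x) (DR y).
Proof.
  unfold DR, refl. rewrite (proj_sub A) by auto.
  replace (hsub (hscal 2 (hsub (proj A x) (proj A y))) (hsub x y))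
    with (hsub (hsub (hscal 2 (proj A x)) x) (hsub (hscal 2 (proj A y)) y)) by vec.
  rewrite (proj_sub B) by auto. vec.
Qed.

Lemma DR_form y : DR y = hadd (hsub (proj B (proj A y)) (proj B (hsub y (proj A y)))) (hsub y (proj A y)).
Proof.
  unfold DR, refl.
  replace (hsub (hscal 2 (proj A y)) y) with (hsub (proj A y) (hsub y (proj A y))) by vec.
  rewrite proj_sub by auto. vec.
Qed.

Lemma DR_firm y : inner y y = inner (DR y) (DR y) + inner (hsub y (DR y)) (hsub y (DR y)).
Proof.
  rewrite DR_form.
  set (a := proj A y). set (b1 := proj B a). set (b2 := proj B (hsub y a)).
  assert (h1 : inner (hsub y a) a = 0) by (apply proj_orth; auto; apply proj_in; auto).
  assert (h2 : inner (hsub a b1) b1 = 0) by (apply proj_orth; auto; apply proj_in; auto).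
  assert (h3 : inner (hsub a b1) b2 = 0) by (apply proj_orth; auto; apply proj_in; auto).
  assert (h4 : inner (hsub (hsub y a) b2) b1 = 0) by (apply proj_orth; auto; apply proj_in; auto).
  assert (h5 : inner (hsub (hsub y a) b2) b2 = 0) by (apply proj_orth; auto; apply proj_in; auto).
  replace (hsub y (hadd (hsub b1 b2) (hsub y a))) with (hadd (hsub a b1) b2) by vec.
  revert h1 h2 h3 h4 h5. isimpl. intros.
  pose proof (inner_sym y a). pose proof (inner_sym y b1). pose proof (inner_sym y b2).
  pose proof (inner_sym a b1). pose proof (inner_sym a b2). pose proof (inner_sym b1 b2).
  lra.
Qed.

Lemma DR_nonexp y : hnorm (DR y) <= hnorm y.
Proof.
  apply hnorm_le_sq. rewrite (DR_firm y). pose proof (inner_pos (hsub y (DR y))). lra.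
Qed.

Lemma DR_zero : DR hzero = hzero.
Proof.
  transitivity (DR (hsub hzero hzero)). f_equal. vec.
  rewrite DR_sub. apply hsub_self.
Qed.

Hypothesis HW : is_closed (set_sum A B).

Lemma DR_reg : exists K, 0 <= K /\ forall y, exists z, DR z = z /\
  inner (hsub y z) (hsub y z) <= K * inner (hsub y (DR y)) (hsub y (DR y)).
Proof.
  destruct (open_mapping A B HA HB HW) as [K [HK HOM]].
  pose proof (W_cs A B HA HB HW) as HWc.
  exists (2 * (K * K)). split. nra.
  intro y.
  set (a := proj A y). set (a' := hsub y a). set (b1 := proj B a). set (b2 := proj B a').
  assert (Aa : A a) by (apply proj_in; auto).
  assert (Bb1 : B b1) by (apply proj_in; auto).
  assert (Bb2 : B b2) by (apply proj_in; auto).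
  assert (Ed : hsub y (DR y) = hadd (hsub a b1) b2) by (rewrite DR_form; fold a a' b1 b2; unfold a'; vec).
  assert (h3 : inner (hsub a b1) b2 = 0) by (apply proj_orth; auto).
  assert (Nd : inner (hsub y (DR y)) (hsub y (DR y)) = inner (hsub a b1) (hsub a b1) + inner b2 b2).
  { rewrite Ed. revert h3. generalize (hsub a b1). intros u h3. isimpl. rewrite (inner_sym b2 u). lra. }
  assert (Wz0 : set_sum A B (hsub a b1)).
  { exists a, (hscal (-1) b1). repeat split; auto. apply cs_scal; auto. vec. }
  destruct (HOM _ Wz0) as [a1 [bb1 [Aa1 [Bbb1 [E1 [Na1 _]]]]]].
  set (c := hsub a a1).
  assert (Ac : A c) by (apply cs_sub; auto).
  assert (Bc : B c).
  { replace c with (hadd b1 bb1). apply cs_add; auto.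
    unfold c. clear -E1. symmetry. transitivity (hadd b1 (hsub (hsub a b1) a1)). vec.
    rewrite E1. vec. }
  set (q := proj (set_sum A B) a').
  assert (Wq : set_sum A B q) by (apply proj_in; auto).
  destruct (HOM _ Wq) as [a2 [bb2 [Aa2 [Bbb2 [E2 [_ Nbb2]]]]]].
  set (c' := hsub a' q).
  assert (AW : forall s, A s -> set_sum A B s).
  { intros s Hs. exists s, hzero. repeat split; auto. apply (cs_zero B HB). vec. }
  assert (BW : forall s, B s -> set_sum A B s).
  { intros s Hs. exists hzero, s. repeat split; auto. apply (cs_zero A HA). vec. }
  assert (Oc' : forall s, set_sum A B s -> inner c' s = 0) by (intros; apply proj_orth; auto).
  assert (Nq : inner q q = inner b2 bb2).
  { assert (o1 := Oc' q Wq). unfold c' in o1.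
    assert (o2 : inner a' a2 = 0) by (apply proj_orth; auto).
    assert (o3 : inner (hsub a' b2) bb2 = 0) by (apply proj_orth; auto).
    revert o1 o3. isimpl. intros o1 o3.
    assert (inner a' q = inner a' a2 + inner a' bb2) by (rewrite E2; isimpl; ring).
    lra. }
  assert (Hq : hnorm q <= K * hnorm b2).
  { pose proof (cs b2 bb2). rewrite <- Nq, <- hnorm_sq in H.
    pose proof (hnorm_ge0 q). pose proof (hnorm_ge0 b2). pose proof (hnorm_ge0 bb2).
    assert (hnorm q * hnorm q <= hnorm q * (K * hnorm b2)) by nra.
    destruct (Req_dec (hnorm q) 0). rewrite H4. nra.
    apply Rmult_le_reg_l with (r := hnorm q). lra. lra. }
  exists (hadd c c'). split.
  - assert (PA : proj A (hadd c c') = c).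
    { apply proj_unique; auto. intros s Hs.
      replace (hsub (hadd c c') c) with c' by vec. apply Oc'. auto. }
    assert (PB : proj B (refl A (hadd c c')) = c).
    { unfold refl. rewrite PA. apply proj_unique; auto. intros s Hs.
      replace (hsub (hsub (hscal 2 c) (hadd c c')) c) with (hscal (-1) c') by vec.
      rewrite inner_scal_l, Oc'; auto. ring. }
    unfold DR. rewrite PA, PB. vec.
  - replace (hsub y (hadd c c')) with (hadd a1 q) by (unfold c, c', a'; vec).
    assert (T2 : inner (hadd a1 q) (hadd a1 q) <= 2 * inner a1 a1 + 2 * inner q q).
    { pose proof (inner_pos (hsub a1 q)). revert H. isimpl. rewrite (inner_sym q a1). intro. lra. }
    assert (T3 : inner a1 a1 <= K * K * inner (hsub a b1) (hsub a b1)).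
    { rewrite <- !hnorm_sq. pose proof (hnorm_ge0 a1). nra. }
    assert (T4 : inner q q <= K * K * inner b2 b2).
    { rewrite <- !hnorm_sq. pose proof (hnorm_ge0 q). nra. }
    rewrite Nd. nra.
Qed.
End DR.

Lemma unifK (m : nat) (P : nat -> R -> Prop) :
  (forall i K K', P i K -> K <= K' -> P i K') ->
  (forall i, (1 <= i <= m)%nat -> exists K, 0 <= K /\ P i K) ->
  exists K, 0 <= K /\ forall i, (1 <= i <= m)%nat -> P i K.
Proof.
  intros Hmono. induction m as [|m IH]; intro H.
  - exists 0. split. lra. intros; lia.
  - destruct IH as [K1 [HK1 P1]]. { intros i Hi. apply H. lia. }
    destruct (H (S m) ltac:(lia)) as [K2 [HK2 P2]].
    exists (Rmax K1 K2). split. pose proof (Rmax_l K1 K2); lra.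
    intros i Hi. destruct (Nat.eq_dec i (S m)).
    + subst. apply Hmono with K2; auto. apply Rmax_r.
    + apply Hmono with K1. apply P1. lia. apply Rmax_l.
Qed.

Lemma maxdist_le {X : HilbertSpace} (C : nat -> X -> Prop) x k M : 0 <= M ->
  (forall i, (1 <= i <= k)%nat -> setdist (C i) x <= M) -> maxdist C x k <= M.
Proof.
  intros HM. induction k; intro H; simpl. lra.
  apply Rmax_lub. apply IHk. intros. apply H. lia. apply H. lia.
Qed.

Fixpoint Dsum {X : HilbertSpace} (m : nat) (U : nat -> X -> Prop) (x : X) (k : nat) : R :=
  match k with
  | O => 0
  | S k => Dsum m U x k + inner (hsub (Tcomp m U k x) (Tcomp m U (S k) x)) (hsub (Tcomp m U k x) (Tcomp m U (S k) x))
  end.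

Section Main.
Context {X : HilbertSpace}.
Implicit Types x y z u v w : X.
Variable m : nat.
Variable U : nat -> X -> Prop.
Hypothesis hm : (1 <= m)%nat.
Hypothesis hU : forall i, (1 <= i <= m)%nat -> closed_subspace (U i).
Hypothesis hsum : forall i, (1 <= i <= m)%nat -> is_closed (set_sum (U i) (U (cyc m (S i)))).

Lemma cyc_range i : (1 <= i <= m)%nat -> (1 <= cyc m (S i) <= m)%nat.
Proof. intro H. unfold cyc. destruct (Nat.eqb_spec (S i) (S m)); lia. Qed.

Lemma hU2 i : (1 <= i <= m)%nat -> closed_subspace (U (cyc m (S i))).
Proof. intro H. apply hU. apply cyc_range. auto. Qed.

Lemma Top_DR i x : Top m U i x = DR (U i) (U (cyc m (S i))) x.
Proof. reflexivity. Qed.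

Lemma Top_sub i x y : (1 <= i <= m)%nat -> Top m U i (hsub x y) = hsub (Top m U i x) (Top m U i y).
Proof. intro H. rewrite !Top_DR. apply DR_sub; auto using hU2. Qed.

Lemma Top_firm i y : (1 <= i <= m)%nat -> inner y y = inner (Top m U i y) (Top m U i y) + inner (hsub y (Top m U i y)) (hsub y (Top m U i y)).
Proof. intro H. rewrite !Top_DR. apply DR_firm; auto using hU2. Qed.

Lemma Top_nonexp i y : (1 <= i <= m)%nat -> hnorm (Top m U i y) <= hnorm y.
Proof. intro H. rewrite !Top_DR. apply DR_nonexp; auto using hU2. Qed.

Lemma Top_zero i : (1 <= i <= m)%nat -> Top m U i hzero = hzero.
Proof. intro H. rewrite !Top_DR. apply DR_zero; auto using hU2. Qed.

Let Zs := inter_fam m (Zset m U).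

Lemma Zs_zero : Zs hzero.
Proof. intros i Hi. apply Top_zero. auto. Qed.

Lemma Dsum_S x k : Dsum m U x (S k) = Dsum m U x k + inner (hsub (Tcomp m U k x) (Tcomp m U (S k) x)) (hsub (Tcomp m U k x) (Tcomp m U (S k) x)).
Proof. reflexivity. Qed.

Lemma Dsum_ge0 x k : 0 <= Dsum m U x k.
Proof. induction k. simpl. lra. rewrite Dsum_S. pose proof (inner_pos (hsub (Tcomp m U k x) (Tcomp m U (S k) x))). lra. Qed.

Lemma Dsum_mono x k j : (k <= j)%nat -> Dsum m U x k <= Dsum m U x j.
Proof.
  intro H. induction H. lra. rewrite Dsum_S. pose proof (inner_pos (hsub (Tcomp m U m0 x) (Tcomp m U (S m0) x))). lra.
Qed.

Lemma chain x z : Zs z -> forall k, (k <= m)%nat ->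
  inner (hsub x z) (hsub x z) = inner (hsub (Tcomp m U k x) z) (hsub (Tcomp m U k x) z) + Dsum m U x k.
Proof.
  intros Hz k. induction k; intro Hk.
  - simpl. lra.
  - rewrite IHk by lia. rewrite Dsum_S.
    assert (Hi : (1 <= S k <= m)%nat) by lia.
    assert (E : hsub (Tcomp m U (S k) x) z = Top m U (S k) (hsub (Tcomp m U k x) z)).
    { rewrite Top_sub by auto. rewrite (Hz (S k) Hi). reflexivity. }
    rewrite E. rewrite (Top_firm (S k) (hsub (Tcomp m U k x) z) Hi).
    rewrite <- E.
    replace (hsub (hsub (Tcomp m U k x) z) (hsub (Tcomp m U (S k) x) z)) with (hsub (Tcomp m U k x) (Tcomp m U (S k) x)) by vec.
    ring.
Qed.

Lemma fejer x z : Zs z -> inner (hsub (Tcomp m U m x) z) (hsub (Tcomp m U m x) z) <= inner (hsub x z) (hsub x z).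
Proof. intro Hz. rewrite (chain x z Hz m (le_n _)). pose proof (Dsum_ge0 x m). lra. Qed.

Lemma dist_steps x k : (k <= m)%nat -> hnorm (hsub x (Tcomp m U k x)) <= INR k * sqrt (Dsum m U x m).
Proof.
  induction k; intro Hk.
  - simpl. rewrite hsub_self, hnorm_zero. lra.
  - rewrite S_INR.
    pose proof (hnorm_sub_tri x (Tcomp m U k x) (Tcomp m U (S k) x)).
    assert (hnorm (hsub (Tcomp m U k x) (Tcomp m U (S k) x)) <= sqrt (Dsum m U x m)).
    { apply sqrt_le_1_alt. pose proof (Dsum_mono x (S k) m Hk). rewrite Dsum_S in H0. pose proof (Dsum_ge0 x k). lra. }
    specialize (IHk ltac:(lia)). lra.
Qed.


Lemma unif : exists K, 0 <= K /\ forall i, (1 <= i <= m)%nat -> forall y, exists z, Top m U i z = z /\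
  inner (hsub y z) (hsub y z) <= K * inner (hsub y (Top m U i y)) (hsub y (Top m U i y)).
Proof.
  apply unifK.
  - intros i K K' H HK y. destruct (H y) as [z [h1 h2]]. exists z. split; auto.
    pose proof (inner_pos (hsub y (Top m U i y))). nra.
  - intros i Hi. destruct (DR_reg (U i) (U (cyc m (S i))) (hU i Hi) (hU2 i Hi) (hsum i Hi)) as [K [HK H]].
    exists K. split; auto.
Qed.

Lemma sq_eps a b d : 0 <= d -> (forall eps, 0 < eps -> a <= (d + eps) * (d + eps) - b) -> a <= d * d - b.
Proof.
  intros Hd H. apply le_eps. intros e He.
  set (eps := Rmin 1 (e / (2 * d + 1))).
  assert (E1 : eps <= 1) by apply Rmin_l.
  assert (E2 : eps <= e / (2 * d + 1)) by apply Rmin_r.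
  assert (E0 : 0 < eps) by (apply Rmin_glb_lt; [lra| apply Rdiv_lt_0_compat; lra]).
  specialize (H eps E0).
  assert (eps * (2 * d + 1) <= e).
  { apply Rmult_le_compat_r with (r := 2 * d + 1) in E2; [|lra].
    replace (e / (2 * d + 1) * (2 * d + 1)) with e in E2 by (field; lra). lra. }
  nra.
Qed.

Hypothesis hreg : bdd_lin_regular m (Zset m U).

Lemma contraction rho : 0 < rho -> exists r, 0 <= r < 1 /\ forall x, hnorm x <= rho ->
  setdist Zs (Tcomp m U m x) * setdist Zs (Tcomp m U m x) <= r * (setdist Zs x * setdist Zs x).
Proof.
  intro Hrho. destruct unif as [K [HK HKp]].
  destruct hreg as [_ Hr]. destruct (Hr rho Hrho) as [mu [Hmu Hmup]].
  set (C := mu * (INR m + sqrt K) + 1).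
  assert (HC : 1 <= C).
  { unfold C. pose proof (pos_INR m). pose proof (sqrt_pos K). nra. }
  exists (1 - / (C * C)). split.
  { assert (0 < / (C * C) <= 1).
    { split. apply Rinv_0_lt_compat. nra. rewrite <- Rinv_1. apply Rinv_le_contravar; nra. }
    lra. }
  intros x Hx.
  assert (Zne : exists c, Zs c) by (exists hzero; apply Zs_zero).
  set (d := setdist Zs x). set (d' := setdist Zs (Tcomp m U m x)). set (D := Dsum m U x m).
  assert (Hd0 : 0 <= d) by (apply setdist_ge0; auto).
  assert (Hd'0 : 0 <= d') by (apply setdist_ge0; auto).
  assert (HD0 : 0 <= D) by apply Dsum_ge0.
  assert (Hreg : d <= (C - 1) * sqrt D).
  { replace (C - 1) with (mu * (INR m + sqrt K)) by (unfold C; ring).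
    eapply Rle_trans. apply Hmup. auto.
    rewrite Rmult_assoc. apply Rmult_le_compat_l. lra.
    apply maxdist_le. pose proof (pos_INR m). pose proof (sqrt_pos K). pose proof (sqrt_pos D). nra.
    intros i Hi. destruct i as [|j]. lia.
    destruct (HKp (S j) Hi (Tcomp m U j x)) as [w [Hw Hwb]].
    change (Top m U (S j) (Tcomp m U j x)) with (Tcomp m U (S j) x) in Hwb.
    eapply Rle_trans. apply (setdist_le _ _ w). exact Hw.
    pose proof (hnorm_sub_tri x (Tcomp m U j x) w).
    pose proof (dist_steps x j ltac:(lia)). fold D in H0.
    assert (hnorm (hsub (Tcomp m U j x) w) <= sqrt K * sqrt D).
    { rewrite <- sqrt_mult_alt by auto. apply sqrt_le_1_alt.
      pose proof (Dsum_mono x (S j) m ltac:(lia)). rewrite Dsum_S in H1. fold D in H1.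
      pose proof (Dsum_ge0 x j). nra. }
    assert (INR j <= INR m) by (apply le_INR; lia).
    pose proof (sqrt_pos D). nra. }
  assert (Hkey : d' * d' <= d * d - D).
  { apply sq_eps; auto. intros eps He.
    destruct (setdist_approx Zs x eps Zne He) as [z [Hz Hzb]]. fold d in Hzb.
    pose proof (setdist_le Zs (Tcomp m U m x) z Hz). fold d' in H.
    pose proof (chain x z Hz m (le_n _)). fold D in H0.
    rewrite <- !hnorm_sq in H0.
    pose proof (hnorm_ge0 (hsub x z)). pose proof (hnorm_ge0 (hsub (Tcomp m U m x) z)).
    nra. }
  assert (HdC : d * d <= C * C * D).
  { pose proof (sqrt_sqrt D HD0). pose proof (sqrt_pos D). nra. }
  assert (d * d * / (C * C) <= D).
  { apply Rmult_le_reg_r with (r := C * C). nra.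
    replace (d * d * / (C * C) * (C * C)) with (d * d) by (field; lra). lra. }
  nra.
Qed.

End Main.

Theorem corollary8p3 (X : HilbertSpace) (m : nat) (U : nat -> X -> Prop)
  (hm : (1 <= m)%nat)
  (hU : forall i, (1 <= i <= m)%nat -> closed_subspace (U i))
  (hsum : forall i, (1 <= i <= m)%nat -> is_closed (set_sum (U i) (U (cyc m (S i)))))
  (hreg : bdd_lin_regular m (Zset m U)) :
  forall x0 : X, exists xbar : X,
    inter_fam m (Zset m U) xbar /\
    lin_conv (fun n => Nat.iter n (Tcomp m U m) x0) xbar.
Proof.
  intro x0.
  set (Zs := inter_fam m (Zset m U)).
  set (T := Tcomp m U m).
  set (xs := fun n => Nat.iter n T x0).
  assert (Zne : exists c, Zs c) by (exists hzero; apply (Zs_zero m U hm hU)).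
  assert (Hxs : forall n, xs (S n) = T (xs n)) by reflexivity.
  assert (Tne : forall x, hnorm (T x) <= hnorm x).
  { intro x. pose proof (fejer m U hm hU x hzero (Zs_zero m U hm hU)).
    rewrite <- (hnorm_sub0 (T x)), <- (hnorm_sub0 x).
    apply hnorm_le_sq. exact H. }
  assert (Hbd : forall n, hnorm (xs n) <= hnorm x0).
  { induction n. simpl. lra. rewrite Hxs. pose proof (Tne (xs n)). lra. }
  destruct (contraction m U hm hU hsum hreg (hnorm x0 + 1)) as [r [Hr Hc]].
  { pose proof (hnorm_ge0 x0). lra. }
  set (d := fun n => setdist Zs (xs n)).
  assert (Hd0 : forall n, 0 <= d n) by (intro; apply setdist_ge0; auto).
  assert (Hdsq : forall n, d n * d n <= r ^ n * (d 0%nat * d 0%nat)).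
  { induction n. simpl. lra.
    assert (d (S n) * d (S n) <= r * (d n * d n)).
    { unfold d. rewrite Hxs. apply Hc. pose proof (Hbd n). lra. }
    simpl pow. nra. }
  set (q := sqrt r).
  assert (Hq0 : 0 <= q) by apply sqrt_pos.
  assert (Hq1 : q < 1) by (unfold q; rewrite <- sqrt_1; apply sqrt_lt_1_alt; lra).
  assert (Hdq : forall n, d n <= d 0%nat * q ^ n).
  { intro n. apply sq_le. pose proof (pow_le q n Hq0). pose proof (Hd0 0%nat). nra.
    replace (d 0%nat * q ^ n * (d 0%nat * q ^ n)) with ((q * q) ^ n * (d 0%nat * d 0%nat))
      by (rewrite Rpow_mult_distr; ring).
    unfold q. rewrite sqrt_sqrt by lra. apply Hdsq. }
  set (q' := (1 + q) / 2).
  assert (Hq'0 : 0 < q') by (unfold q'; lra).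
  assert (Hq'1 : q' < 1) by (unfold q'; lra).
  assert (Hqq' : q <= q') by (unfold q'; lra).
  assert (Hz : forall n, exists z, Zs z /\ hnorm (hsub (xs n) z) < d n + q' ^ n).
  { intro n. apply setdist_approx; auto. apply pow_lt; auto. }
  destruct (fchoice hzero _ Hz) as [zs Hzs].
  assert (Fej : forall z, Zs z -> forall n j, hnorm (hsub (xs (n + j)%nat) z) <= hnorm (hsub (xs n) z)).
  { intros z Hzz n j. induction j. rewrite Nat.add_0_r. lra.
    replace (n + S j)%nat with (S (n + j)) by lia. rewrite Hxs.
    pose proof (fejer m U hm hU (xs (n + j)%nat) z Hzz). apply hnorm_le_sq in H. unfold T. lra. }
  assert (Hzb : forall n, hnorm (hsub (xs n) (zs n)) <= (d 0%nat + 1) * q' ^ n).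
  { intro n. destruct (Hzs n) as [_ H]. pose proof (Hdq n).
    pose proof (pow_incr q q' n ltac:(lra)). pose proof (Hd0 0%nat). nra. }
  destruct (cauchy_lim xs (2 * (d 0%nat + 1)) q') as [xbar [Hl1 Hl2]].
  { lra. }
  { intros n k Hnk. replace k with (n + (k - n))%nat by lia.
    destruct (Hzs n) as [Zn _].
    pose proof (Fej (zs n) Zn n (k - n)%nat).
    pose proof (hnorm_sub_tri (xs (n + (k - n))%nat) (zs n) (xs n)).
    rewrite (hnorm_sub_sym (zs n)) in H0. pose proof (Hzb n). lra. }
  exists xbar. split.
  - intros i Hi. unfold Zset. apply sub_eq0. apply hnorm_le0.
    apply le_lim with (c := 2 * (2 * (d 0%nat + 1) + (d 0%nat + 1))) (q := q'). lra.
    intro n. destruct (Hzs n) as [Zn _]. set (z := zs n) in *.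
    assert (E : hsub (Top m U i xbar) xbar = hsub (Top m U i (hsub xbar z)) (hsub xbar z)).
    { rewrite Top_sub by auto. rewrite (Zn i Hi). vec. }
    rewrite E.
    pose proof (hnorm_sub_le (Top m U i (hsub xbar z)) (hsub xbar z)).
    assert (hnorm (Top m U i (hsub xbar z)) <= hnorm (hsub xbar z)) by (eapply Top_nonexp; eauto).
    pose proof (hnorm_sub_tri xbar (xs n) z). rewrite (hnorm_sub_sym xbar (xs n)) in H1.
    pose proof (Hl2 n). pose proof (Hzb n). unfold z in *. lra.
  - exists (2 * (d 0%nat + 1)), q'. split. pose proof (Hd0 0%nat). lra.
    split. lra. intro n. apply (Hl2 n).
Qed.
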